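(* Let $n>1$ and let $\varphi:\mathcal A\to\mathcal A$ be a continuous, multiplicative (i.e. $\varphi(AB)=\varphi(A)\varphi(B)$), norm preserving (i.e. $\|\varphi(A)\|=\|A\|$) map, not assumed linear, such that $\varphi(S)=S$. Then $\varphi$ is either homogeneous, i.e. $\varphi(\alpha A)=\alpha\varphi(A)$ for all $\alpha\in\mathbb C$, $A\in\mathcal A$, or skew-homogeneous, i.e. $\varphi(\alpha A)=\overline{\alpha}\varphi(A)$ for all $\alpha\in\mathbb C$, $A\in\mathcal A$.
   Context: $S$ denotes the $n\times n$ nilpotent Jordan block with ones on the superdiagonal and zeros elsewhere. $\mathcal A=\{f(S): f\text{ a complex polynomial}\}$ is the algebra of $n\times n$ upper-triangular Toeplitz matrices. $\|\cdot\|$ is the operator norm on $M_n(\mathbb C)$ induced by the Euclidean norm on $\mathbb C^n$. *)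

(* Defs.v *)
From Stdlib Require Import Reals Lra Arith ClassicalEpsilon.
Open Scope R_scope.

Definition Cx : Type := (R * R)%type.
Definition C0 : Cx := (0, 0).
Definition C1 : Cx := (1, 0).
Definition Cadd (z w : Cx) : Cx := (fst z + fst w, snd z + snd w).
Definition Copp (z : Cx) : Cx := (- fst z, - snd z).
Definition Cmul (z w : Cx) : Cx :=
  (fst z * fst w - snd z * snd w, fst z * snd w + snd z * fst w).
Definition Cconj (z : Cx) : Cx := (fst z, - snd z).
Definition Cnorm2 (z : Cx) : R := fst z * fst z + snd z * snd z.

Fixpoint Csum (m : nat) (f : nat -> Cx) : Cx :=
  match m with O => C0 | S m' => Cadd (Csum m' f) (f m') end.
Fixpoint Rsum (m : nat) (f : nat -> R) : R :=
  match m with O => 0 | S m' => Rsum m' f + f m' end.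

(** n x n complex matrices, represented as functions nat -> nat -> Cx that
    vanish outside the index range {0..n-1}^2 (all operations below keep
    this invariant, so Leibniz equality is matrix equality). *)
Definition Mat : Type := nat -> nat -> Cx.
Definition inrange (n i j : nat) : bool := (Nat.ltb i n && Nat.ltb j n)%bool.

Definition mmul (n : nat) (A B : Mat) : Mat :=
  fun i j => if inrange n i j then Csum n (fun k => Cmul (A i k) (B k j)) else C0.
Definition madd (n : nat) (A B : Mat) : Mat :=
  fun i j => if inrange n i j then Cadd (A i j) (B i j) else C0.
Definition msub (n : nat) (A B : Mat) : Mat :=
  fun i j => if inrange n i j then Cadd (A i j) (Copp (B i j)) else C0.
Definition mscale (n : nat) (a : Cx) (A : Mat) : Mat :=
  fun i j => if inrange n i j then Cmul a (A i j) else C0.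
Definition mzero : Mat := fun _ _ => C0.
Definition mid (n : nat) : Mat :=
  fun i j => if inrange n i j then (if Nat.eqb i j then C1 else C0) else C0.

Definition Smat (n : nat) : Mat :=
  fun i j => if inrange n i j then (if Nat.eqb j (S i) then C1 else C0) else C0.

Fixpoint mpow (n : nat) (A : Mat) (k : nat) : Mat :=
  match k with O => mid n | S k' => mmul n A (mpow n A k') end.

(** f(S) for the complex polynomial f with coefficient list c (c_0 + c_1 X + ...) *)
Fixpoint poly_at_S (n : nat) (c : list Cx) (k : nat) : Mat :=
  match c with
  | nil => mzero
  | cons a c' => madd n (mscale n a (mpow n (Smat n) k)) (poly_at_S n c' (S k))
  end.

Definition inA (n : nat) (M : Mat) : Prop := exists c : list Cx, M = poly_at_S n c 0.

Definition vnorm (n : nat) (x : nat -> Cx) : R := sqrt (Rsum n (fun i => Cnorm2 (x i))).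
Definition mapply (n : nat) (A : Mat) (x : nat -> Cx) : nat -> Cx :=
  fun i => Csum n (fun k => Cmul (A i k) (x k)).
Definition opnorm (n : nat) (A : Mat) : R :=
  epsilon (inhabits 0)
    (fun r => is_lub (fun y => exists x, vnorm n x <= 1 /\ y = vnorm n (mapply n A x)) r).

(* Main.v *)
Require Import Defs.
From Stdlib Require Import Reals Lra Lia Arith ClassicalEpsilon FunctionalExtensionality List.
From Coquelicot Require Complex.
Import Defs.
Open Scope R_scope.

Lemma Cx_eq (z w : Cx) : fst z = fst w -> snd z = snd w -> z = w.
Proof. destruct z, w; simpl; intros; subst; reflexivity. Qed.

Ltac cring := apply Cx_eq; unfold Cmul, Cadd, Copp, C0, C1, Cconj; simpl; ring.

Ltac dec := repeat match goal with
  | |- context [Nat.eqb ?a ?b] => destruct (Nat.eqb_spec a b)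
  | |- context [Nat.ltb ?a ?b] => destruct (Nat.ltb_spec a b)
  | |- context [Nat.leb ?a ?b] => destruct (Nat.leb_spec a b)
  end; simpl in *; try lia; try reflexivity.

Lemma Csum_ext m f g : (forall l, (l < m)%nat -> f l = g l) -> Csum m f = Csum m g.
Proof. induction m; simpl; intros H; auto. rewrite IHm, H; auto. Qed.

Lemma Csum_delta m p x : Csum m (fun l => if l =? p then x else C0) = if p <? m then x else C0.
Proof.
  induction m; simpl. { dec. }
  rewrite IHm. dec; subst; try cring.
Qed.

Lemma Csum_zero m : Csum m (fun _ => C0) = C0.
Proof. induction m; simpl; auto. rewrite IHm; cring. Qed.

Lemma CsumD m f g : Csum m (fun l => Cadd (f l) (g l)) = Cadd (Csum m f) (Csum m g).
Proof. induction m; simpl. cring. rewrite IHm; cring. Qed.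

Definition T (n : nat) (f : nat -> Cx) : Mat :=
  fun i j => if inrange n i j then (if i <=? j then f (j - i)%nat else C0) else C0.
Definition dl (k : nat) : nat -> Cx := fun m => if m =? k then C1 else C0.

Lemma T_ext n f g : (forall m, (m < n)%nat -> f m = g m) -> T n f = T n g.
Proof.
  intros H; extensionality i; extensionality j; unfold T, inrange; dec. apply H; lia.
Qed.



Lemma mpow_S n k : mpow n (Smat n) k = fun i j => if inrange n i j then
   (if j =? (i + k)%nat then C1 else C0) else C0.
Proof.
  induction k; simpl.
  - extensionality i; extensionality j; unfold mid, inrange. dec.
  - rewrite IHk. extensionality i; extensionality j. unfold mmul, inrange.
    destruct (Nat.ltb_spec i n); destruct (Nat.ltb_spec j n); simpl; try reflexivity.
    rewrite Csum_ext with (g := fun l => if l =? S i then (if j =? S (i + k) then C1 else C0) else C0).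
    + rewrite Csum_delta. dec.
    + intros l Hl. unfold Smat, inrange. dec; try cring.
Qed.

Lemma poly_at_S_eq n c k : poly_at_S n c k = fun i j => if inrange n i j then
     (if ((i + k)%nat <=? j) then nth (j - i - k)%nat c C0 else C0) else C0.
Proof.
  revert k; induction c as [|a c IH]; intros k; simpl.
  - extensionality i; extensionality j; unfold mzero, inrange; dec; destruct (j-i-k)%nat; reflexivity.
  - rewrite IH, mpow_S. extensionality i; extensionality j. unfold madd, mscale, inrange.
    dec; try cring.
    + replace (j - i - k)%nat with 0%nat by lia. cring.
    + replace (j - i - k)%nat with (S (j - i - S k)) by lia. cring.
Qed.

Lemma inA_T n f : inA n (T n f).
Proof.
  exists (map f (seq 0 n)).
  rewrite poly_at_S_eq. extensionality i; extensionality j. unfold T, inrange; dec.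
  replace (j - i - 0)%nat with (j-i)%nat by lia.
  rewrite nth_indep with (d' := f 0%nat) by (rewrite length_map, length_seq; lia).
  rewrite map_nth, seq_nth by lia. reflexivity.
Qed.

Lemma inA_T_inv n X : inA n X -> X = T n (fun m => X 0%nat m).
Proof.
  intros [c ->]. rewrite poly_at_S_eq. extensionality i; extensionality j. unfold T, inrange; dec.
  rewrite !Nat.sub_0_r. reflexivity.
Qed.

Ltac decs := dec; try subst; try cring; try (f_equal; lia).

Lemma mid_T n : mid n = T n (dl 0).
Proof. extensionality i; extensionality j; unfold mid, T, dl, inrange; dec. Qed.
Lemma Smat_T n : Smat n = T n (dl 1).
Proof. extensionality i; extensionality j; unfold Smat, T, dl, inrange; dec. Qed.
Lemma madd_T n f g : madd n (T n f) (T n g) = T n (fun m => Cadd (f m) (g m)).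
Proof. extensionality i; extensionality j; unfold madd, T, inrange; dec; cring. Qed.
Lemma mscale_T n a f : mscale n a (T n f) = T n (fun m => Cmul a (f m)).
Proof. extensionality i; extensionality j; unfold mscale, T, inrange; dec; cring. Qed.
Lemma msub_T n f g : msub n (T n f) (T n g) = T n (fun m => Cadd (f m) (Copp (g m))).
Proof. extensionality i; extensionality j; unfold msub, T, inrange; dec; cring. Qed.

Lemma mul_scal n a g : mmul n (T n (fun m => Cmul a (dl 0 m))) (T n g) = T n (fun m => Cmul a (g m)).
Proof.
  extensionality i; extensionality j; unfold mmul at 1; unfold inrange at 1.
  destruct (Nat.ltb_spec i n); destruct (Nat.ltb_spec j n); simpl;
    try (unfold T, inrange; dec; fail).
  rewrite (Csum_ext _ _ (fun l => if l =? i then Cmul a (T n g i j) else C0)).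
  - rewrite Csum_delta. unfold T, inrange; dec; try cring.
  - intros l Hl. unfold T, dl, inrange. decs.
Qed.

Lemma mul_E n f : (1 < n)%nat ->
  mmul n (T n f) (T n (dl (n-1))) = T n (fun m => Cmul (f 0%nat) (dl (n-1) m)).
Proof.
  intros Hn.
  extensionality i; extensionality j; unfold mmul at 1; unfold inrange at 1.
  destruct (Nat.ltb_spec i n); destruct (Nat.ltb_spec j n); simpl;
    try (unfold T, inrange; dec; fail).
  rewrite (Csum_ext _ _ (fun l => if l =? 0%nat then
      (if andb (i =? 0%nat) (j =? (n-1))%nat then f 0%nat else C0) else C0)).
  - rewrite Csum_delta. unfold T, dl, inrange; decs.
  - intros l Hl. unfold T, dl, inrange. decs.
Qed.

Lemma mul_S n f :
  mmul n (T n f) (T n (dl 1)) = T n (fun m => if m =? 0%nat then C0 else f (m-1)%nat).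
Proof.
  extensionality i; extensionality j; unfold mmul at 1; unfold inrange at 1.
  destruct (Nat.ltb_spec i n); destruct (Nat.ltb_spec j n); simpl;
    try (unfold T, inrange; dec; fail).
  rewrite (Csum_ext _ _ (fun l => if l =? (j-1)%nat then
      (if andb (1 <=? j) (i <=? j-1)%nat then f (j-1-i)%nat else C0) else C0)).
  - rewrite Csum_delta. unfold T, dl, inrange; decs.
  - intros l Hl. unfold T, dl, inrange. decs.
Qed.

Lemma mul_IE n f b : (1 < n)%nat ->
  mmul n (T n f) (T n (fun m => Cadd (dl 0 m) (Cmul b (dl (n-1) m)))) =
  T n (fun m => Cadd (f m) (Cmul (Cmul b (f 0%nat)) (dl (n-1) m))).
Proof.
  intros Hn.
  extensionality i; extensionality j; unfold mmul at 1; unfold inrange at 1.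
  destruct (Nat.ltb_spec i n); destruct (Nat.ltb_spec j n); simpl;
    try (unfold T, inrange; dec; fail).
  rewrite (Csum_ext _ _ (fun l => Cadd (if l =? j then T n f i j else C0)
      (if l =? 0%nat then
      (if andb (i =? 0%nat) (j =? (n-1))%nat then Cmul b (f 0%nat) else C0) else C0))).
  - rewrite CsumD, !Csum_delta. unfold T, dl, inrange; decs.
  - intros l Hl. unfold T, dl, inrange. decs.
Qed.


Definition Cm (z : Cx) : R := sqrt (Cnorm2 z).

Lemma Cnorm2_ge0 z : 0 <= Cnorm2 z.
Proof. unfold Cnorm2; nra. Qed.
Lemma Cm_ge0 z : 0 <= Cm z.
Proof. apply sqrt_pos. Qed.
Lemma Cm_Cmod z : Cm z = Complex.Cmod z.
Proof. unfold Cm, Cnorm2, Complex.Cmod. f_equal. ring. Qed.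
Lemma Cm_mul a b : Cm (Cmul a b) = Cm a * Cm b.
Proof. rewrite !Cm_Cmod. apply Complex.Cmod_mult. Qed.
Lemma Cm_add a b : Cm (Cadd a b) <= Cm a + Cm b.
Proof. rewrite !Cm_Cmod. apply Complex.Cmod_triangle. Qed.
Lemma Cm_opp a : Cm (Copp a) = Cm a.
Proof. unfold Cm, Cnorm2, Copp; simpl. f_equal. ring. Qed.
Lemma Cm_sq z : Cm z * Cm z = Cnorm2 z.
Proof. unfold Cm. apply sqrt_sqrt, Cnorm2_ge0. Qed.
Lemma Cm_eq0 z : Cm z = 0 -> z = C0.
Proof.
  intros H. apply sqrt_eq_0 in H; [|apply Cnorm2_ge0]. unfold Cnorm2 in H.
  destruct z as [a b]; simpl in H. unfold C0. f_equal; nra.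
Qed.
Lemma Cm_C1 : Cm C1 = 1.
Proof. unfold Cm, Cnorm2, C1; simpl. replace (1*1+0*0) with 1 by ring. apply sqrt_1. Qed.
Lemma Cm_C0 : Cm C0 = 0.
Proof. unfold Cm, Cnorm2, C0; simpl. replace (0*0+0*0) with 0 by ring. apply sqrt_0. Qed.

Lemma Rsum_ext m f g : (forall l, (l < m)%nat -> f l = g l) -> Rsum m f = Rsum m g.
Proof. induction m; simpl; intros H; auto. rewrite IHm, H; auto. Qed.
Lemma Rsum_le m f g : (forall l, (l < m)%nat -> f l <= g l) -> Rsum m f <= Rsum m g.
Proof. induction m; simpl; intros H; [lra|]. specialize (IHm (fun l Hl => H l ltac:(lia))).
  specialize (H m ltac:(lia)). lra. Qed.
Lemma Rsum_nonneg m f : (forall l, (l < m)%nat -> 0 <= f l) -> 0 <= Rsum m f.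
Proof. intros H. apply Rle_trans with (Rsum m (fun _ => 0)).
  - clear H. induction m; simpl; lra.
  - apply Rsum_le; auto. Qed.
Lemma Rsum_term m f k : (forall l, (l < m)%nat -> 0 <= f l) -> (k < m)%nat -> f k <= Rsum m f.
Proof.
  induction m; simpl; intros H Hk; [lia|].
  assert (0 <= Rsum m f) by (apply Rsum_nonneg; intros; apply H; lia).
  destruct (Nat.eq_dec k m).
  - subst. lra.
  - specialize (IHm (fun l Hl => H l ltac:(lia)) ltac:(lia)). specialize (H m ltac:(lia)). lra.
Qed.
Lemma Rsum_scale m c f : Rsum m (fun i => c * f i) = c * Rsum m f.
Proof. induction m; simpl; [ring|]. rewrite IHm; ring. Qed.
Lemma Rsum_delta m p x : Rsum m (fun l => if l =? p then x else 0) = if p <? m then x else 0.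
Proof. induction m; simpl. { dec. } rewrite IHm. dec; subst; lra. Qed.

Lemma Cm_Csum m f : Cm (Csum m f) <= Rsum m (fun l => Cm (f l)).
Proof. induction m; simpl. rewrite Cm_C0; lra. eapply Rle_trans. apply Cm_add. lra. Qed.

Definition Oset n X := fun y => exists x, vnorm n x <= 1 /\ y = vnorm n (mapply n X x).

Lemma vnorm_comp n x k : (k < n)%nat -> Cm (x k) <= vnorm n x.
Proof.
  intros Hk. unfold Cm, vnorm. apply sqrt_le_1_alt.
  apply (Rsum_term n (fun i => Cnorm2 (x i))); auto. intros; apply Cnorm2_ge0.
Qed.

Lemma Oset_bound n X : bound (Oset n X).
Proof.
  exists (sqrt (Rsum n (fun i => Rsum n (fun k => Cm (X i k)) * Rsum n (fun k => Cm (X i k))))).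
  intros y [x [Hx ->]]. unfold vnorm at 1. apply sqrt_le_1_alt. apply Rsum_le.
  intros i Hi. unfold mapply. rewrite <- Cm_sq.
  assert (H : Cm (Csum n (fun k => Cmul (X i k) (x k))) <= Rsum n (fun k => Cm (X i k))).
  { eapply Rle_trans. apply Cm_Csum. apply Rsum_le. intros l Hl. rewrite Cm_mul.
    pose proof (vnorm_comp n x l Hl). pose proof (Cm_ge0 (X i l)). pose proof (Cm_ge0 (x l)). nra. }
  pose proof (Cm_ge0 (Csum n (fun k => Cmul (X i k) (x k)))). nra.
Qed.

Lemma opnorm_spec n X : is_lub (Oset n X) (opnorm n X).
Proof.
  unfold opnorm. apply epsilon_spec.
  destruct (completeness (Oset n X) (Oset_bound n X)) as [m Hm].
  - exists (vnorm n (mapply n X (fun _ => C0))). exists (fun _ => C0). split; auto.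
    unfold vnorm. rewrite (Rsum_ext _ _ (fun _ => 0)).
    + clear. replace (Rsum n (fun _ => 0)) with 0. rewrite sqrt_0; lra. induction n; simpl; lra.
    + intros; unfold Cnorm2, C0; simpl; ring.
  - exists m; exact Hm.
Qed.

Lemma opnorm_ge n X x : vnorm n x <= 1 -> vnorm n (mapply n X x) <= opnorm n X.
Proof. intros H. apply (proj1 (opnorm_spec n X)). exists x; auto. Qed.

Lemma opnorm_le n X r : (forall x, vnorm n x <= 1 -> vnorm n (mapply n X x) <= r) -> opnorm n X <= r.
Proof. intros H. apply (proj2 (opnorm_spec n X)). intros y [x [Hx ->]]. auto. Qed.

Lemma opnorm_col n X j : (j < n)%nat -> sqrt (Rsum n (fun i => Cnorm2 (X i j))) <= opnorm n X.
Proof.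
  intros Hj. set (e := fun k => if k =? j then C1 else C0).
  assert (He : vnorm n e <= 1).
  { unfold vnorm. rewrite (Rsum_ext _ _ (fun l => if l =? j then 1 else 0)).
    - rewrite Rsum_delta. dec. rewrite sqrt_1; lra.
    - intros l Hl; unfold e, Cnorm2, C1, C0; dec; ring. }
  pose proof (opnorm_ge n X e He). unfold vnorm in H.
  rewrite (Rsum_ext _ _ (fun i => Cnorm2 (X i j))) in H; auto.
  intros i Hi. unfold mapply. f_equal.
  rewrite (Csum_ext _ _ (fun k => if k =? j then X i j else C0)).
  - rewrite Csum_delta; dec.
  - intros k Hk; unfold e; dec; subst; cring.
Qed.

Lemma opnorm_entry n X i j : (i < n)%nat -> (j < n)%nat -> Cm (X i j) <= opnorm n X.
Proof.
  intros Hi Hj. eapply Rle_trans; [|apply (opnorm_col n X j Hj)].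
  unfold Cm. apply sqrt_le_1_alt. apply (Rsum_term n (fun i => Cnorm2 (X i j))); auto.
  intros; apply Cnorm2_ge0.
Qed.

Lemma opnorm_scal n a : opnorm n (T n (fun m => Cmul a (dl 0 m))) <= Cm a.
Proof.
  apply opnorm_le. intros x Hx. unfold vnorm.
  rewrite (Rsum_ext _ _ (fun i => Cnorm2 a * Cnorm2 (x i))).
  - rewrite Rsum_scale. unfold Cm. apply sqrt_le_1_alt.
    assert (Rsum n (fun i => Cnorm2 (x i)) <= 1).
    { unfold vnorm in Hx. pose proof (Rsum_nonneg n (fun i => Cnorm2 (x i)) (fun l _ => Cnorm2_ge0 (x l))).
      destruct (Rle_lt_dec (Rsum n (fun i => Cnorm2 (x i))) 1); auto.
      exfalso. pose proof (sqrt_lt_1 1 (Rsum n (fun i => Cnorm2 (x i))) ltac:(lra) ltac:(lra) r) as H1. rewrite sqrt_1 in H1. lra. }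
    pose proof (Cnorm2_ge0 a). nra.
  - intros i Hi. unfold mapply.
    rewrite (Csum_ext _ _ (fun k => if k =? i then Cmul a (x i) else C0)).
    + rewrite Csum_delta; dec. unfold Cnorm2, Cmul; simpl; ring.
    + intros k Hk; unfold T, dl, inrange; dec; subst; try cring.
Qed.


Record Good (n : nat) (phi : Mat -> Mat) : Prop := {
  g_n : (1 < n)%nat;
  g_in : forall A, inA n A -> inA n (phi A);
  g_cont : forall A, inA n A -> forall eps, 0 < eps -> exists delta, 0 < delta /\
     forall B, inA n B -> opnorm n (msub n B A) < delta ->
       opnorm n (msub n (phi B) (phi A)) < eps;
  g_mul : forall A B, inA n A -> inA n B -> phi (mmul n A B) = mmul n (phi A) (phi B);
  g_norm : forall A, inA n A -> opnorm n (phi A) = opnorm n A;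
  g_S : phi (Smat n) = Smat n }.

Definition Isc n a := T n (fun m => Cmul a (dl 0 m)).
Definition Esc n a := T n (fun m => Cmul a (dl (n-1) m)).
Definition Jm n u := T n (fun m => Cadd (dl 0 m) (Cmul u (dl (n-1) m))).

Lemma T_entry n f i j : (i < n)%nat -> (j < n)%nat -> (i <= j)%nat -> T n f i j = f (j - i)%nat.
Proof. intros; unfold T, inrange; dec. Qed.

Lemma phiT n phi A : Good n phi -> inA n A -> phi A = T n (fun m => phi A 0%nat m).
Proof. intros G HA. apply inA_T_inv, (g_in _ _ G), HA. Qed.

Lemma mul_Esc n f c : (1 < n)%nat ->
  mmul n (T n f) (Esc n c) = Esc n (Cmul c (f 0%nat)).
Proof.
  intros Hn. unfold Esc.
  extensionality i; extensionality j; unfold mmul at 1; unfold inrange at 1.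
  destruct (Nat.ltb_spec i n); destruct (Nat.ltb_spec j n); simpl;
    try (unfold T, inrange; dec; fail).
  rewrite (Csum_ext _ _ (fun l => if l =? 0%nat then
      (if andb (i =? 0%nat) (j =? (n-1))%nat then Cmul c (f 0%nat) else C0) else C0)).
  - rewrite Csum_delta. unfold T, dl, inrange; decs.
  - intros l Hl. unfold T, dl, inrange. decs.
Qed.


Lemma phi_Ek n phi k : Good n phi -> (1 <= k)%nat -> phi (T n (dl k)) = T n (dl k).
Proof.
  intros G Hk. induction k as [|k IH]; [lia|].
  destruct (Nat.eq_dec k 0) as [->|Hk0]. { rewrite <- Smat_T. apply (g_S _ _ G). }
  assert (E : T n (dl (S k)) = mmul n (T n (dl k)) (T n (dl 1))).
  { rewrite mul_S. apply T_ext. intros m Hm. unfold dl; dec. }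
  rewrite E, (g_mul _ _ G), IH, <- Smat_T, (g_S _ _ G); try apply inA_T; try lia.
  all: try apply inA_T. all: try lia. all: reflexivity.
Qed.

Definition Mx n (phi : Mat -> Mat) a := phi (Isc n a).
Definition lam n (phi : Mat -> Mat) a := Mx n phi a 0%nat 0%nat.
Definition del n (phi : Mat -> Mat) u := phi (Jm n u) 0%nat (n-1)%nat.

Lemma Esc_entry n c : (1 < n)%nat -> Esc n c 0%nat (n-1)%nat = c.
Proof. intros. unfold Esc. rewrite T_entry by lia. unfold dl; dec; cring. Qed.
Lemma Jm_entry n c : (1 < n)%nat -> Jm n c 0%nat (n-1)%nat = c.
Proof. intros. unfold Jm. rewrite T_entry by lia. unfold dl; dec; cring. Qed.

Lemma Esc_mul n a b : Esc n (Cmul a b) = mmul n (Isc n a) (Esc n b).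
Proof. unfold Isc, Esc. rewrite mul_scal. apply T_ext; intros; cring. Qed.

Lemma E_Esc n : T n (dl (n-1)) = Esc n C1.
Proof. unfold Esc. apply T_ext; intros; cring. Qed.

Lemma phi_Esc n phi a : Good n phi -> phi (Esc n a) = Esc n (lam n phi a).
Proof.
  intros G. pose proof (g_n _ _ G) as Hn.
  replace (Esc n a) with (Esc n (Cmul a C1)) by (f_equal; cring).
  rewrite Esc_mul, (g_mul _ _ G) by (unfold Isc, Esc; apply inA_T).
  rewrite <- E_Esc, phi_Ek by (auto; lia). rewrite (phiT n phi (Isc n a)) by (auto; apply inA_T).
  rewrite E_Esc, mul_Esc by lia. unfold lam, Mx. f_equal. cring.
Qed.

Lemma lam_mul n phi a b : Good n phi -> lam n phi (Cmul a b) = Cmul (lam n phi a) (lam n phi b).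
Proof.
  intros G. pose proof (g_n _ _ G) as Hn.
  assert (H : Esc n (lam n phi (Cmul a b)) = Esc n (Cmul (lam n phi a) (lam n phi b))).
  { rewrite <- phi_Esc by auto. rewrite Esc_mul, (g_mul _ _ G) by (unfold Isc, Esc; apply inA_T).
    rewrite phi_Esc by auto. rewrite (phiT n phi (Isc n a)) by (auto; apply inA_T).
    rewrite mul_Esc by lia. unfold lam, Mx. f_equal. cring. }
  rewrite <- (Esc_entry n (lam n phi (Cmul a b))), H by lia. apply Esc_entry; lia.
Qed.

Lemma lam_one n phi : Good n phi -> lam n phi C1 = C1.
Proof.
  intros G. pose proof (g_n _ _ G) as Hn.
  assert (H : Esc n (lam n phi C1) = Esc n C1).
  { rewrite <- phi_Esc by auto. rewrite <- E_Esc. apply phi_Ek; auto; lia. }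
  rewrite <- (Esc_entry n (lam n phi C1)), H by lia. apply Esc_entry; lia.
Qed.

Lemma Mx_bound n phi a i j : Good n phi -> (i < n)%nat -> (j < n)%nat -> Cm (Mx n phi a i j) <= Cm a.
Proof.
  intros G Hi Hj. apply Rle_trans with (opnorm n (Mx n phi a)). apply opnorm_entry; auto.
  unfold Mx. rewrite (g_norm _ _ G) by (unfold Isc; apply inA_T). apply opnorm_scal.
Qed.

Lemma lam_bound n phi a : Good n phi -> Cm (lam n phi a) <= Cm a.
Proof. intros G. pose proof (g_n _ _ G). apply Mx_bound; auto; lia. Qed.

Lemma Jm_mul n u v : (1 < n)%nat -> mmul n (Jm n u) (Jm n v) = Jm n (Cadd u v).
Proof.
  intros Hn. unfold Jm at 1 2. rewrite mul_IE by lia. unfold Jm. apply T_ext.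
  intros m Hm. unfold dl; dec; cring.
Qed.

Lemma phi_J n phi u : Good n phi -> phi (Jm n u) = Jm n (del n phi u).
Proof.
  intros G. pose proof (g_n _ _ G) as Hn.
  assert (HS : mmul n (Jm n u) (Smat n) = Smat n).
  { unfold Jm. rewrite Smat_T, mul_S. apply T_ext. intros m Hm. unfold dl; dec; cring. }
  assert (HA : inA n (Jm n u)) by apply inA_T.
  assert (HS2 : mmul n (phi (Jm n u)) (Smat n) = Smat n).
  { rewrite <- (g_S _ _ G) at 1. rewrite <- (g_mul _ _ G), HS; auto. apply (g_S _ _ G).
    rewrite Smat_T; apply inA_T. }
  set (g := fun m => phi (Jm n u) 0%nat m).
  assert (Hg : phi (Jm n u) = T n g) by (apply phiT; auto).
  rewrite Hg, Smat_T, mul_S in HS2.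
  assert (Hg2 : forall m, (m + 1 < n)%nat -> g m = dl 0 m).
  { intros m Hm. pose proof (f_equal (fun X => X 0%nat (m+1)%nat) HS2) as E. simpl in E.
    rewrite !T_entry in E by lia. unfold dl in *. revert E; dec.
    all: replace (m + 1 - 0 - 1)%nat with m by lia; auto. }
  rewrite Hg. unfold del. rewrite Hg. unfold Jm. rewrite T_entry by lia. apply T_ext.
  intros m Hm. replace (n - 1 - 0)%nat with (n-1)%nat by lia.
  destruct (Nat.eq_dec m (n-1)).
  - subst. unfold dl; dec. cring.
  - rewrite Hg2 by lia. unfold dl; dec; cring.
Qed.

Lemma del_add n phi u v : Good n phi -> del n phi (Cadd u v) = Cadd (del n phi u) (del n phi v).
Proof.
  intros G. pose proof (g_n _ _ G) as Hn.
  assert (H : Jm n (del n phi (Cadd u v)) = Jm n (Cadd (del n phi u) (del n phi v))).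
  { rewrite <- phi_J, <- Jm_mul, (g_mul _ _ G), !phi_J by (auto; apply inA_T).
    apply Jm_mul; auto. }
  rewrite <- (Jm_entry n (del n phi (Cadd u v))), H by lia. apply Jm_entry; lia.
Qed.

Lemma Cm_real x : 0 <= x -> Cm (x, 0) = x.
Proof. intros. unfold Cm, Cnorm2; simpl. replace (x*x+0*0) with (x*x) by ring. apply sqrt_square; auto. Qed.

Lemma INR_inv_le K k : (0 < K)%nat -> (K <= k)%nat -> / INR k <= / INR K.
Proof. intros. apply Rinv_le_contravar. apply lt_0_INR; auto. apply le_INR; auto. Qed.

Lemma cont_claim n phi z eps : Good n phi -> 0 < eps -> exists K : nat, (0 < K)%nat /\
  forall k : nat, (K <= k)%nat ->
  Cm (Cadd (Cmul (lam n phi (/ INR k, 0)) (del n phi (Cmul (INR k, 0) z))) (Copp (lam n phi z)))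
   <= eps + / INR k.
Proof.
  intros G He. pose proof (g_n _ _ G) as Hn.
  assert (HA : inA n (Esc n z)) by apply inA_T.
  destruct (g_cont _ _ G _ HA eps He) as [delta [Hd Hc]].
  destruct (archimed_cor1 delta Hd) as [K [HK HK0]].
  exists K. split; auto. intros k Hk.
  assert (Hk0 : 0 < INR k) by (apply lt_0_INR; lia).
  set (al := (/ INR k, 0)).
  set (B := mmul n (Isc n al) (Jm n (Cmul (INR k, 0) z))).
  assert (HB : inA n B) by (unfold B, Isc, Jm; rewrite mul_scal; apply inA_T).
  assert (Hsub : msub n B (Esc n z) = Isc n al).
  { unfold B, Isc, Jm, Esc. rewrite mul_scal, msub_T. apply T_ext. intros m Hm.
    unfold dl, al; destruct z as [z1 z2]. dec; apply Cx_eq; unfold Cmul, Cadd, Copp, C0, C1; simpl; field; lra. }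
  assert (Hal : Cm al = / INR k) by (apply Cm_real; left; apply Rinv_0_lt_compat; auto).
  specialize (Hc B HB).
  rewrite Hsub in Hc.
  assert (Hlt : opnorm n (msub n (phi B) (phi (Esc n z))) < eps).
  { apply Hc. eapply Rle_lt_trans. apply opnorm_scal. rewrite Hal.
    eapply Rle_lt_trans; [apply INR_inv_le; eauto|]. auto. }
  set (g := fun m => Mx n phi al 0%nat m).
  assert (HphiB : phi B = T n (fun m => Cadd (g m) (Cmul (Cmul (del n phi (Cmul (INR k, 0) z)) (g 0%nat)) (dl (n-1) m)))).
  { unfold B. rewrite (g_mul _ _ G) by (unfold Isc, Jm; apply inA_T).
    rewrite phi_J by auto. rewrite (phiT n phi (Isc n al)) by (auto; unfold Isc; apply inA_T).
    unfold Jm. rewrite mul_IE by lia. reflexivity. }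
  rewrite HphiB, phi_Esc in Hlt by auto. unfold Esc in Hlt. rewrite msub_T in Hlt.
  pose proof (Rle_lt_trans _ _ _ (opnorm_entry n _ 0%nat (n-1)%nat ltac:(lia) ltac:(lia)) Hlt) as H1.
  rewrite T_entry in H1 by lia.
  pose proof (Mx_bound n phi al 0%nat (n-1)%nat G ltac:(lia) ltac:(lia)) as H2. rewrite Hal in H2.
  match type of H1 with Cm ?e < _ =>
    replace (Cadd (Cmul (lam n phi al) (del n phi (Cmul (INR k, 0) z))) (Copp (lam n phi z)))
    with (Cadd e (Copp (Mx n phi al 0%nat (n-1)%nat))) end.
  - eapply Rle_trans. apply Cm_add. rewrite Cm_opp. lra.
  - unfold dl, lam, g. replace (n - 1 - 0)%nat with (n-1)%nat by lia. dec. cring.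
Qed.

Lemma small_zero x K : 0 <= x -> 0 <= K -> (forall eta, 0 < eta -> x <= K * eta) -> x = 0.
Proof.
  intros Hx HK H. destruct (Rle_lt_or_eq_dec 0 x Hx) as [Hp|]; auto.
  exfalso. specialize (H (x / (2 * (K + 1)))).
  assert (P : 0 < x / (2 * (K + 1))) by (apply Rdiv_lt_0_compat; lra).
  specialize (H P).
  assert (Q : K * (x / (2 * (K + 1))) <= x / 2).
  { unfold Rdiv. rewrite Rinv_mult. 
    assert (0 < / (K+1)) by (apply Rinv_0_lt_compat; lra).
    assert (K * / (K+1) <= 1).
    { apply Rmult_le_reg_r with (K+1); [lra|]. rewrite Rmult_assoc, Rinv_l by lra. lra. }
    assert (0 < /2) by lra.
    replace (K * (x * (/ 2 * / (K + 1)))) with ((K * / (K+1)) * (x * /2)) by ring. nra. }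
  lra.
Qed.

Lemma approx_eq w l c :
  (forall eta, 0 < eta -> exists r, Cm (Cadd (Cmul r w) (Copp l)) <= eta /\
      Cm (Cadd (Cmul r c) (Copp C1)) <= eta) -> c <> C0 /\ w = Cmul c l.
Proof.
  intros H. split.
  - intros ->. destruct (H (1/2) ltac:(lra)) as [r [_ H2]].
    replace (Cadd (Cmul r C0) (Copp C1)) with (Copp C1) in H2 by cring.
    rewrite Cm_opp, Cm_C1 in H2. lra.
  - assert (Z : Cm (Cadd w (Copp (Cmul c l))) = 0).
    { apply (small_zero _ (Cm w + Cm c)). apply Cm_ge0.
      pose proof (Cm_ge0 w); pose proof (Cm_ge0 c); lra.
      intros eta Heta. destruct (H eta Heta) as [r [H1 H2]].
      replace (Cadd w (Copp (Cmul c l))) with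
        (Cadd (Cmul w (Copp (Cadd (Cmul r c) (Copp C1)))) (Cmul c (Cadd (Cmul r w) (Copp l)))) by cring.
      eapply Rle_trans. apply Cm_add. rewrite !Cm_mul, Cm_opp.
      pose proof (Cm_ge0 w); pose proof (Cm_ge0 c). nra. }
    apply Cm_eq0 in Z. destruct w as [w1 w2]. apply Cx_eq;
    [apply (f_equal fst) in Z | apply (f_equal snd) in Z];
    unfold Cadd, Copp, Cmul, C0 in *; simpl in *; lra.
Qed.

Lemma del_zero n phi : Good n phi -> del n phi C0 = C0.
Proof.
  intros G. pose proof (del_add n phi C0 C0 G) as H.
  replace (Cadd C0 C0) with C0 in H by cring.
  destruct (del n phi C0) as [a b] eqn:E. unfold Cadd in H; simpl in H. inversion H.
  unfold C0. f_equal; lra.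
Qed.

Lemma del_nat n phi k z : Good n phi -> del n phi (Cmul (INR k, 0) z) = Cmul (INR k, 0) (del n phi z).
Proof.
  intros G. induction k.
  - simpl. replace (Cmul (0,0) z) with C0 by cring. rewrite del_zero by auto. cring.
  - replace (Cmul (INR (S k), 0) z) with (Cadd (Cmul (INR k, 0) z) z) by (rewrite S_INR; cring).
    rewrite del_add, IHk by auto. rewrite S_INR. cring.
Qed.

Lemma del_lam n phi z : Good n phi -> del n phi C1 <> C0 /\ del n phi z = Cmul (del n phi C1) (lam n phi z).
Proof.
  intros G. apply approx_eq. intros eta Heta.
  destruct (cont_claim n phi z (eta/2) G ltac:(lra)) as [K1 [HK1 H1]].
  destruct (cont_claim n phi C1 (eta/2) G ltac:(lra)) as [K2 [HK2 H2]].
  destruct (archimed_cor1 (eta/2) ltac:(lra)) as [K3 [HK3 HK30]].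
  set (k := (K1 + K2 + K3)%nat).
  assert (Hinv : / INR k <= eta / 2).
  { left. eapply Rle_lt_trans; [apply INR_inv_le with (K := K3)|]; unfold k; auto; lia. }
  specialize (H1 k ltac:(unfold k; lia)). specialize (H2 k ltac:(unfold k; lia)).
  rewrite del_nat in H1, H2 by auto. rewrite lam_one in H2 by auto.
  exists (Cmul (lam n phi (/ INR k, 0)) (INR k, 0)). split.
  - replace (Cmul (Cmul (lam n phi (/ INR k, 0)) (INR k, 0)) (del n phi z)) with
      (Cmul (lam n phi (/ INR k, 0)) (Cmul (INR k, 0) (del n phi z))) by cring. lra.
  - replace (Cmul (Cmul (lam n phi (/ INR k, 0)) (INR k, 0)) (del n phi C1)) with
      (Cmul (lam n phi (/ INR k, 0)) (Cmul (INR k, 0) (del n phi C1))) by cring. lra.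
Qed.


Lemma Cmul_cancel c x y : c <> C0 -> Cmul c x = Cmul c y -> x = y.
Proof.
  destruct c as [a b], x as [x1 x2], y as [y1 y2]. unfold Cmul, C0; simpl.
  intros Hc H. inversion H as [[H1 H2]].
  assert (P : 0 < a * a + b * b).
  { destruct (Rle_lt_dec (a*a+b*b) 0); auto. exfalso. apply Hc. f_equal; nra. }
  assert (E1 : (a*a+b*b) * (x1 - y1) = 0).
  { replace ((a*a+b*b)*(x1-y1)) with (a*((a*x1-b*x2)-(a*y1-b*y2)) + b*((a*x2+b*x1)-(a*y2+b*y1))) by ring. rewrite H1, H2; ring. }
  assert (E2 : (a*a+b*b) * (x2 - y2) = 0).
  { replace ((a*a+b*b)*(x2-y2)) with (a*((a*x2+b*x1)-(a*y2+b*y1)) - b*((a*x1-b*x2)-(a*y1-b*y2))) by ring. rewrite H1, H2; ring. }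
  apply Rmult_integral in E1; apply Rmult_integral in E2.
  f_equal; lra.
Qed.

Lemma Cm_le_sq z w : Cm z <= Cm w -> Cnorm2 z <= Cnorm2 w.
Proof. intros H. unfold Cm in H. apply sqrt_le_0 in H; auto; apply Cnorm2_ge0. Qed.

Lemma classify (L : Cx -> Cx) :
  (forall z w, L (Cadd z w) = Cadd (L z) (L w)) ->
  (forall z w, L (Cmul z w) = Cmul (L z) (L w)) ->
  L C1 = C1 -> (forall z, Cm (L z) <= Cm z) ->
  (forall z, L z = z) \/ (forall z, L z = Cconj z).
Proof.
  intros Hadd Hmul H1 Hb.
  assert (H0 : L C0 = C0).
  { pose proof (Hadd C0 C0) as H. replace (Cadd C0 C0) with C0 in H by cring.
    destruct (L C0) as [a b]. unfold Cadd in H; simpl in H. inversion H. unfold C0; f_equal; lra. }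
  assert (Hopp : forall z, L (Copp z) = Copp (L z)).
  { intros z. pose proof (Hadd z (Copp z)) as H. replace (Cadd z (Copp z)) with C0 in H by cring.
    rewrite H0 in H. destruct (L z) as [a b], (L (Copp z)) as [c d].
    unfold Cadd, C0, Copp in *; simpl in *. inversion H. f_equal; lra. }
  assert (Hnat : forall k, L (INR k, 0) = (INR k, 0)).
  { induction k. simpl. exact H0.
    replace (INR (S k), 0) with (Cadd (INR k, 0) C1) by (rewrite S_INR; cring).
    rewrite Hadd, IHk, H1. reflexivity. }
  assert (Hreal : forall x, L (x, 0) = (x, 0)).
  { intros x. destruct (L (x, 0)) as [a b] eqn:Ex.
    assert (Hm : forall k, (a - INR k) * (a - INR k) + b * b <= (x - INR k) * (x - INR k)).
    { intros k. pose proof (Cm_le_sq _ _ (Hb (Cadd (x,0) (Copp (INR k, 0))))) as H.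
      rewrite Hadd, Hopp, Ex, Hnat in H. unfold Cnorm2, Cadd, Copp in H; simpl in H. lra. }
    assert (Hp : forall k, (a + INR k) * (a + INR k) + b * b <= (x + INR k) * (x + INR k)).
    { intros k. pose proof (Cm_le_sq _ _ (Hb (Cadd (x,0) (INR k, 0)))) as H.
      rewrite Hadd, Ex, Hnat in H. unfold Cnorm2, Cadd, Copp in H; simpl in H. lra. }
    assert (Ha : a = x).
    { destruct (Rtotal_order a x) as [Hl|[He|Hg]]; auto; exfalso.
      - destruct (INR_unbounded (x * x / (2 * (x - a)))) as [k Hk].
        specialize (Hm k). pose proof (pos_INR k).
        assert (INR k * (2 * (x - a)) > x * x).
        { apply Rmult_gt_reg_r with (/ (2 * (x - a))). apply Rinv_0_lt_compat; lra.
          rewrite Rmult_assoc, Rinv_r by lra. lra. }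
        nra.
      - destruct (INR_unbounded (x * x / (2 * (a - x)))) as [k Hk].
        specialize (Hp k). pose proof (pos_INR k).
        assert (INR k * (2 * (a - x)) > x * x).
        { apply Rmult_gt_reg_r with (/ (2 * (a - x))). apply Rinv_0_lt_compat; lra.
          rewrite Rmult_assoc, Rinv_r by lra. lra. }
        nra. }
    subst a. specialize (Hm 0%nat). simpl in Hm. f_equal. nra. }
  destruct (L (0, 1)) as [p q] eqn:Ei.
  assert (Hi2 : Cmul (p, q) (p, q) = (-1, 0)).
  { rewrite <- Ei, <- Hmul. replace (Cmul (0,1) (0,1)) with (-1, 0) by cring. apply Hreal. }
  unfold Cmul in Hi2; simpl in Hi2. inversion Hi2 as [[E1 E2]].
  assert (Hp0 : p = 0) by nra. subst p.
  assert (Hz : forall z, L z = (fst z, snd z * q)).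
  { intros [a b]. replace (a, b) with (Cadd (a, 0) (Cmul (b, 0) (0, 1))) by cring.
    rewrite Hadd, Hmul, !Hreal, Ei. cring. }
  assert (Hq : q = 1 \/ q = -1) by nra.
  destruct Hq as [->| ->]; [left|right]; intros z; rewrite Hz; destruct z; cring.
Qed.


Lemma lam_add n phi z w : Good n phi -> lam n phi (Cadd z w) = Cadd (lam n phi z) (lam n phi w).
Proof.
  intros G. destruct (del_lam n phi C1 G) as [Hc _].
  apply (Cmul_cancel (del n phi C1)); auto.
  rewrite <- (proj2 (del_lam n phi (Cadd z w) G)), del_add by auto.
  rewrite (proj2 (del_lam n phi z G)), (proj2 (del_lam n phi w G)). cring.
Qed.

Lemma Mx_scalar n phi a : Good n phi -> Cnorm2 (lam n phi a) = Cnorm2 a ->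
  Mx n phi a = Isc n (lam n phi a).
Proof.
  intros G Hl. pose proof (g_n _ _ G) as Hn.
  set (g := fun m => Mx n phi a 0%nat m).
  assert (Hg : Mx n phi a = T n g) by (unfold Mx; apply phiT; auto; unfold Isc; apply inA_T).
  pose proof (opnorm_col n (Mx n phi a) (n-1)%nat ltac:(lia)) as H.
  assert (H2 : opnorm n (Mx n phi a) <= Cm (lam n phi a)).
  { unfold Mx. rewrite (g_norm _ _ G) by (unfold Isc; apply inA_T).
    unfold Cm. rewrite Hl. fold (Cm a). apply opnorm_scal. }
  pose proof (Rle_trans _ _ _ H H2) as H3. unfold Cm in H3.
  apply sqrt_le_0 in H3; [|apply Rsum_nonneg; intros; apply Cnorm2_ge0|apply Cnorm2_ge0].
  destruct n as [|n']; [lia|]. simpl in H3. replace (n' - 0)%nat with n' in H3 by lia.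
  assert (Hlast : Mx (S n') phi a n' n' = lam (S n') phi a).
  { rewrite Hg. rewrite T_entry by lia. replace (n' - n')%nat with 0%nat by lia. reflexivity. }
  rewrite Hlast in H3.
  assert (Hz : forall i, (i < n')%nat -> Mx (S n') phi a i n' = C0).
  { intros i Hi. apply Cm_eq0. unfold Cm.
    pose proof (Rsum_term n' (fun i => Cnorm2 (Mx (S n') phi a i n')) i
       (fun l _ => Cnorm2_ge0 _) Hi). simpl in H0.
    pose proof (Cnorm2_ge0 (Mx (S n') phi a i n')).
    replace (Cnorm2 (Mx (S n') phi a i n')) with 0 by lra. apply sqrt_0. }
  rewrite Hg. unfold Isc. apply T_ext. intros m Hm.
  destruct m as [|m].
  - unfold dl, g, lam; simpl. cring.
  - specialize (Hz (n' - S m)%nat ltac:(lia)). rewrite Hg, T_entry in Hz by lia.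
    replace (n' - (n' - S m))%nat with (S m) in Hz by lia. rewrite Hz. unfold dl. dec. cring.
Qed.

Lemma phi_scale n phi a A : Good n phi -> Cnorm2 (lam n phi a) = Cnorm2 a -> inA n A ->
  phi (mscale n a A) = mscale n (lam n phi a) (phi A).
Proof.
  intros G Hl HA.
  assert (EA : A = T n (fun m => A 0%nat m)) by (apply inA_T_inv; auto).
  rewrite EA. rewrite mscale_T, <- (mul_scal n a (fun m => A 0%nat m)), (g_mul _ _ G) by (apply inA_T).
  fold (Isc n a). fold (Mx n phi a). rewrite Mx_scalar by auto.
  rewrite (phiT n phi (T n (fun m => A 0%nat m))) by (auto; apply inA_T).
  unfold Isc. rewrite mul_scal, mscale_T. reflexivity.
Qed.

Theorem lemma2p4 (n : nat) (phi : Mat -> Mat) :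
  (1 < n)%nat ->
  (* phi maps the algebra A into itself *)
  (forall A, inA n A -> inA n (phi A)) ->
  (* continuity (w.r.t. the operator norm) *)
  (forall A, inA n A -> forall eps, 0 < eps -> exists delta, 0 < delta /\
     forall B, inA n B -> opnorm n (msub n B A) < delta ->
       opnorm n (msub n (phi B) (phi A)) < eps) ->
  (* multiplicative *)
  (forall A B, inA n A -> inA n B -> phi (mmul n A B) = mmul n (phi A) (phi B)) ->
  (* norm preserving *)
  (forall A, inA n A -> opnorm n (phi A) = opnorm n A) ->
  phi (Smat n) = Smat n ->
  (forall (a : Cx) A, inA n A -> phi (mscale n a A) = mscale n a (phi A)) \/
  (forall (a : Cx) A, inA n A -> phi (mscale n a A) = mscale n (Cconj a) (phi A)).
Proof.
  intros Hn Hin Hc Hm Hnorm HS.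
  assert (G : Good n phi) by (constructor; auto).
  destruct (classify (lam n phi) (fun z w => lam_add n phi z w G) (fun z w => lam_mul n phi z w G)
     (lam_one n phi G) (fun z => lam_bound n phi z G)) as [Hid|Hcj].
  - left. intros a A HA. rewrite phi_scale, Hid; auto. rewrite Hid; auto.
  - right. intros a A HA. rewrite phi_scale, Hcj; auto. rewrite Hcj. unfold Cnorm2, Cconj; simpl; ring.
Qed.
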